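(* Let $S'$ be a finite poset that has an induced sub-poset isomorphic to one of the posets $S_6,S_7,S_8$ below. Then there exists a stochastically monotone generator on $S'$ which is not realizably monotone. $S_6=\{a,b,c,d,e,f\}$ with strict relations exactly $a<b,a<c,a<d,a<e,a<f,b<e,c<e,c<f,d<f$. $S_7=\{a,b,c,d,e,f\}$ with strict relations exactly $a<d,a<f,b<e,b<f,c<d,c<e$. $S_8=\{a,b,c,d,e,f\}$ with strict relations exactly $a<e,a<f,b<d,b<e,b<f,c<d,c<e$. *)

(* Defs.v *)
From HB Require Import structures.
From mathcomp Require Import all_boot all_order all_algebra.
Set Implicit Arguments. Unset Strict Implicit. Unset Printing Implicit Defensive.
Import Order.TTheory GRing.Theory Num.Theory.

Local Open Scope ring_scope.

Section Gen.
Variables (R : realFieldType) (d : Order.disp_t) (T : finPOrderType d).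

Definition generator (Q : T -> T -> R) : Prop :=
  (forall x y : T, x != y -> 0 <= Q x y) /\ (forall x : T, \sum_(y : T) Q x y = 0).

Definition upset (U : {set T}) : Prop :=
  forall x y : T, (x <= y)%O -> x \in U -> y \in U.

Definition stoch_monotone (Q : T -> T -> R) : Prop :=
  forall (x y : T) (U : {set T}), upset U -> (x <= y)%O ->
    (x \in U) = (y \in U) ->
    \sum_(z in U) Q x z <= \sum_(z in U) Q y z.

Definition monotone_map (f : {ffun T -> T}) : bool :=
  [forall x, forall y, (x <= y)%O ==> (f x <= f y)%O].

(* Realizable monotonicity: Q is a nonnegative combination of the generators
   F_f - I of deterministic monotone maps f, i.e.
   Q(x,y) = sum_{f monotone} lam_f ([f x = y] - [x = y]). *)
Definition realizably_monotone (Q : T -> T -> R) : Prop :=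
  exists lam : {ffun T -> T} -> R,
    (forall f, 0 <= lam f) /\
    (forall x y : T,
       Q x y = \sum_(f | monotone_map f) lam f * ((f x == y)%:R - (x == y)%:R)).

End Gen.

(* The six-element posets, with a,b,c,d,e,f encoded as 0,1,2,3,4,5. *)
Definition S6_strict : seq (nat * nat) :=
  [:: (0,1); (0,2); (0,3); (0,4); (0,5); (1,4); (2,4); (2,5); (3,5)]%N.
Definition S7_strict : seq (nat * nat) :=
  [:: (0,3); (0,5); (1,4); (1,5); (2,3); (2,4)]%N.
Definition S8_strict : seq (nat * nat) :=
  [:: (0,4); (0,5); (1,3); (1,4); (1,5); (2,3); (2,4)]%N.

Definition rel_of (s : seq (nat * nat)) (i j : 'I_6) : bool :=
  (i == j) || ((nat_of_ord i, nat_of_ord j) \in s).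

Definition induced_embedding (d : Order.disp_t) (T : finPOrderType d)
  (le : 'I_6 -> 'I_6 -> bool) (g : 'I_6 -> T) : Prop :=
  injective g /\ (forall i j : 'I_6, le i j = (g i <= g j)%O).

(* Main.v *)
Require Import Defs.
From HB Require Import structures.
From mathcomp Require Import all_boot all_order all_algebra.
From mathcomp Require Import lra.
Set Implicit Arguments. Unset Strict Implicit. Unset Printing Implicit Defensive.
Import Order.TTheory GRing.Theory Num.Theory.

Definition o0 : 'I_6 := @Ordinal 6 0 isT.
Definition o1 : 'I_6 := @Ordinal 6 1 isT.
Definition o2 : 'I_6 := @Ordinal 6 2 isT.
Definition o3 : 'I_6 := @Ordinal 6 3 isT.
Definition o4 : 'I_6 := @Ordinal 6 4 isT.
Definition o5 : 'I_6 := @Ordinal 6 5 isT.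
Definition ord6 : seq 'I_6 := [:: o0; o1; o2; o3; o4; o5].

Lemma mem_ord6 (i : 'I_6) : i \in ord6.
Proof.
case: i => [[|[|[|[|[|[|m]]]]]] Hi] //.
Qed.

Lemma uniq_ord6 : uniq ord6. Proof. by []. Qed.

Fixpoint allb (n : nat) : seq (seq bool) :=
  if n is n'.+1 then [seq b :: l | b <- [:: true; false], l <- allb n'] else [:: [::]].

Lemma mem_allb n (l : seq bool) : size l = n -> l \in allb n.
Proof.
elim: n l => [|n IH] [|b l] //.
move=> [Hs]; rewrite [allb _]/=.
by rewrite !mem_cat; case: b; rewrite map_f ?orbT //; exact: IH.
Qed.

Definition mem6 (s : seq bool) (i : 'I_6) := nth false s i.
Definition mk6 (f : 'I_6 -> bool) : seq bool := [seq f j | j <- ord6].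

Lemma mem6_mk (f : 'I_6 -> bool) i : mem6 (mk6 f) i = f i.
Proof.
rewrite /mem6 /mk6 /ord6.
case: i => [[|[|[|[|[|[|m]]]]]] Hi] //=; congr f; exact: val_inj.
Qed.

Lemma size_mk6 f : size (mk6 f) = 6. Proof. by rewrite size_map. Qed.

Definition single (t : 'I_6) := mk6 (fun j => j == t).
Definition emp := mk6 (fun _ => false).
Definition union s t := mk6 (fun j => mem6 s j || mem6 t j).
Definition minus s t := mk6 (fun j => mem6 s j && ~~ mem6 t j).
Definition interb s t := mk6 (fun j => mem6 s j && mem6 t j).
Definition nonemp s := has (mem6 s) ord6.
Definition subb s t := all (fun j => mem6 s j ==> mem6 t j) ord6.
Definition cnt s := count (mem6 s) ord6.
Definition cnt2 s t := count (fun j => mem6 s j && mem6 t j) ord6.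

Section Chk.
Variables (le6 : rel 'I_6) (p q : 'I_6) (P : seq bool).
Definition rule (D U : seq bool) : seq bool :=
  if mem6 D q then (if mem6 U q then single p else emp)
  else if mem6 U p then (if mem6 D p then single q else if nonemp D then single p else emp)
  else if mem6 D p && mem6 U q then union (single p) (single q)
  else if nonemp (interb U P) then single p else single q.
Definition rt D U := minus (rule D U) (interb D U).
Definition downb (D : seq bool) := all (fun i => all (fun j => mem6 D j && le6 i j ==> mem6 D i) ord6) ord6.
Definition upb (U : seq bool) := all (fun i => all (fun j => mem6 U i && le6 i j ==> mem6 U j) ord6) ord6.
Definition crossb (D U : seq bool) := all (fun i => all (fun j => mem6 D i && mem6 U j ==> le6 i j) ord6) ord6.
Definition typs := let ab := allb 6 in
  [seq t <- [seq (D,U) | D <- ab, U <- ab] | downb t.1 && upb t.2 && crossb t.1 t.2].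
Definition ups := [seq V <- allb 6 | upb V].
Definition okpair (t1 t2 : seq bool * seq bool) (V : seq bool) :=
  let r1 := rt t1.1 t1.2 in let r2 := rt t2.1 t2.2 in
  (~~ has (fun j => mem6 V j && mem6 t2.1 j) ord6 ==> (cnt2 r1 V <= cnt2 r2 V)) &&
  (subb t1.2 V ==> (cnt2 r1 V + cnt r2 <= cnt2 r2 V + cnt r1)).
Definition chk := let ts := typs in let us := ups in
  all (fun t1 : seq bool * seq bool => all (fun t2 : seq bool * seq bool =>
     subb t1.1 t2.1 && subb t2.2 t1.2 ==> all (okpair t1 t2) us) ts) ts.
End Chk.

Lemma chk6 : chk (rel_of S6_strict) o2 o5 [:: true; true; false; true; false; true].
Proof. by vm_compute. Qed.
Lemma chk7 : chk (rel_of S7_strict) o1 o5 [:: true; false; true; false; false; true].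
Proof. by vm_compute. Qed.
Lemma chk8 : chk (rel_of S8_strict) o0 o5 [:: false; true; true; false; false; true].
Proof. by vm_compute. Qed.

Local Open Scope ring_scope.

Section Constr.
Variables (R : realFieldType) (d : Order.disp_t) (T : finPOrderType d).
Variables (le6 : rel 'I_6) (g : 'I_6 -> T) (p q : 'I_6) (P : seq bool).
Hypothesis emb : forall i j, le6 i j = (g i <= g j)%O.

Definition Dl (x : T) := mk6 (fun i => (g i <= x)%O).
Definition Ul (x : T) := mk6 (fun i => (x <= g i)%O).
Definition tgt (x : T) := rt p q P (Dl x) (Ul x).
Definition Qc (x y : T) : R :=
  \sum_(i <- ord6) (mem6 (tgt x) i)%:R * ((g i == y)%:R - (x == y)%:R).

Lemma sum_eq_in (U : {set T}) (a : T) : \sum_(z in U) ((a == z)%:R : R) = (a \in U)%:R.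
Proof.
case: (boolP (a \in U)) => aU.
  rewrite (bigD1 a) //= eqxx big1 ?addr0 // => z /andP[_].
  by rewrite eq_sym => /negbTE ->.
rewrite big1 // => z zU; case: eqP => // az; subst z; by rewrite zU in aU.
Qed.

Lemma sum_count (b : 'I_6 -> bool) : \sum_(i <- ord6) ((b i)%:R : R) = (count b ord6)%:R.
Proof.
rewrite -sum1_count natr_sum [RHS]big_mkcond; apply: eq_bigr => i _.
by case: (b i).
Qed.

Lemma Qrow (x : T) (U : {set T}) :
  \sum_(z in U) Qc x z =
  (cnt2 (tgt x) (mk6 (fun i => g i \in U)))%:R - (x \in U)%:R * (cnt (tgt x))%:R.
Proof.
rewrite /Qc exchange_big /=.
rewrite (eq_bigr (fun i => (mem6 (tgt x) i && (g i \in U))%:R - (x \in U)%:R * (mem6 (tgt x) i)%:R)); last first.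
  move=> i _; rewrite -mulr_sumr sumrB !sum_eq_in mulrBr.
  by case: (mem6 _ i); case: (g i \in U); case: (x \in U);
    rewrite /= ?mulr1n ?mulr0n ?mul1r ?mul0r ?mulr1 ?mulr0 ?subr0 ?sub0r.
rewrite sumrB -mulr_sumr !sum_count; congr (_%:R - _ * _%:R).
Qed.

Lemma Qc_gen : generator Qc.
Proof.
split.
  move=> x y /negbTE xy; rewrite /Qc; apply: sumr_ge0 => i _.
  by rewrite xy subr0 mulr_ge0.
move=> x; have := Qrow x [set: T].
rewrite (eq_bigl (fun z => true)) => [->|z]; last by rewrite in_setT.
rewrite in_setT mul1r /cnt2 /cnt; apply/eqP; rewrite subr_eq0; apply/eqP; congr (_%:R).
by apply: eq_count => i; rewrite mem6_mk in_setT andbT.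
Qed.

Lemma typs_in (z : T) : (Dl z, Ul z) \in typs le6.
Proof.
rewrite /typs mem_filter; apply/andP; split; last first.
  by apply: (@allpairs_f _ _ _ pair); apply: mem_allb; exact: size_mk6.
apply/andP; split; first (apply/andP; split).
- apply/allP => i _; apply/allP => j _; rewrite !mem6_mk emb.
  by apply/implyP => /andP[jz ij]; exact: le_trans ij jz.
- apply/allP => i _; apply/allP => j _; rewrite !mem6_mk emb.
  by apply/implyP => /andP[zi ij]; exact: le_trans zi ij.
- apply/allP => i _; apply/allP => j _; rewrite !mem6_mk emb.
  by apply/implyP => /andP[iz zj]; exact: le_trans iz zj.
Qed.

Lemma Qc_mono : chk le6 p q P -> stoch_monotone Qc.
Proof.
move=> H x y U upU lexy xyU; rewrite !Qrow.
set V := mk6 (fun i => g i \in U).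
have Vin : V \in ups le6.
  rewrite /ups mem_filter; apply/andP; split; last by apply: mem_allb; exact: size_mk6.
  apply/allP => i _; apply/allP => j _; rewrite !mem6_mk emb.
  by apply/implyP => /andP[iU ij]; exact: upU ij iU.
move: H; rewrite /chk; cbv zeta.
move=> /allP/(_ _ (typs_in x))/allP/(_ _ (typs_in y))/implyP H.
have Hsub : subb (Dl x) (Dl y) && subb (Ul y) (Ul x).
  apply/andP; split; apply/allP => j _; rewrite !mem6_mk; apply/implyP => hj.
  + exact: le_trans hj lexy.
  + exact: le_trans lexy hj.
move: (H Hsub) => {H} /allP/(_ _ Vin)/andP[H1 H2].
rewrite /tgt.
case: (boolP (x \in U)) => xU.
- have yU : y \in U by rewrite -xyU.
  have Hs : subb (Ul x) V.
    apply/allP => j _; rewrite !mem6_mk; apply/implyP => xj; exact: upU xj xU.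
  move: H2; rewrite Hs /= => Hn.
  move: Hn; rewrite -(ler_nat R) !natrD yU !mul1r => Hn.
  lra.
- have yU : y \notin U by rewrite -xyU.
  have Hs : ~~ has (fun j => mem6 V j && mem6 (Dl y) j) ord6.
    apply/hasPn => j _; rewrite !mem6_mk; apply/negP => /andP[jU jy].
    by rewrite (upU _ _ jy jU) in yU.
  move: H1; rewrite Hs /= => Hn.
  by rewrite ?(negbTE xU) ?(negbTE yU) !mul0r !subr0 ler_nat.
Qed.

End Constr.


Section Cert.
Variables (R : realFieldType) (d : Order.disp_t) (T : finPOrderType d).

Lemma sum_neq (a c : T) : \sum_(y | y != c) ((a == y)%:R : R) = (a != c)%:R.
Proof.
case: (eqVneq a c) => [->|ac].
  by rewrite big1 // => y yc; rewrite eq_sym (negbTE yc).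
rewrite (bigD1 a) //= eqxx big1 ?addr0 // => y /andP[_].
by rewrite eq_sym => /negbTE ->.
Qed.

Lemma no_real (Q : T -> T -> R) (E : seq (T * T)) (C : seq T) :
  (forall e, e \in E -> e.1 != e.2) ->
  (forall f : {ffun T -> T}, monotone_map f ->
     (forall x y, x != y -> Q x y = 0 -> f x != y) ->
     \sum_(e <- E) ((f e.1 == e.2)%:R : R) <= \sum_(c <- C) (f c != c)%:R) ->
  realizably_monotone Q ->
  \sum_(e <- E) Q e.1 e.2 <= \sum_(c <- C) \sum_(y | y != c) Q c y.
Proof.
move=> HE Hpt [lam [lam0 HQ]].
have Qoff x y : x != y -> Q x y = \sum_(f | monotone_map f) lam f * (f x == y)%:R.
  by move=> /negbTE xy; rewrite HQ; apply: eq_bigr => f _; rewrite xy subr0.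
have Hz f : monotone_map f -> 0 < lam f -> forall x y, x != y -> Q x y = 0 -> f x != y.
  move=> mf lf x y xy; rewrite Qoff // => /psumr_eq0P H0.
  have := H0 (fun h _ => mulr_ge0 (lam0 h) (ler0n _ _)) f mf.
  apply: contra_eqN => /eqP ->; rewrite eqxx mulr1; exact: lt0r_neq0.
have -> : \sum_(e <- E) Q e.1 e.2 =
          \sum_(f | monotone_map f) lam f * \sum_(e <- E) (f e.1 == e.2)%:R.
  rewrite big_seq (eq_bigr (fun e => \sum_(f | monotone_map f) lam f * (f e.1 == e.2)%:R)); last first.
    by move=> e He; rewrite Qoff // HE.
  rewrite -big_seq exchange_big /=; apply: eq_bigr => f _; by rewrite mulr_sumr.
have -> : \sum_(c <- C) \sum_(y | y != c) Q c y =
          \sum_(f | monotone_map f) lam f * \sum_(c <- C) (f c != c)%:R.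
  rewrite (eq_bigr (fun c => \sum_(f | monotone_map f) lam f * (f c != c)%:R)); last first.
    move=> c _; rewrite (eq_bigr (fun y => \sum_(f | monotone_map f) lam f * (f c == y)%:R)); last first.
      by move=> y yc; rewrite Qoff // eq_sym.
    rewrite exchange_big /=; apply: eq_bigr => f _; by rewrite -mulr_sumr sum_neq.
  rewrite exchange_big /=; apply: eq_bigr => f _; by rewrite mulr_sumr.
apply: ler_sum => f mf.
have [->|lf] := eqVneq (lam f) 0; first by rewrite !mul0r.
have lf' : 0 < lam f by rewrite lt_def lf lam0.
by apply: ler_wpM2l; [exact: lam0 | apply: Hpt => //; exact: Hz].
Qed.
End Cert.


Section Gen2.
Variables (R : realFieldType) (d : Order.disp_t) (T : finPOrderType d).
Variables (le6 : rel 'I_6) (g : 'I_6 -> T) (p q : 'I_6) (P : seq bool).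
Hypothesis emb : forall i j, le6 i j = (g i <= g j)%O.

Lemma tgt_img s : tgt g p q P (g s) = rt p q P (mk6 (fun i => le6 i s)) (mk6 (fun i => le6 s i)).
Proof. by rewrite /tgt /Dl /Ul /mk6; congr rt; apply: eq_map => i; rewrite emb. Qed.

Lemma Q_single x t : tgt g p q P x = single t ->
  forall y, Qc R g p q P x y = (g t == y)%:R - (x == y)%:R.
Proof.
move=> H y; rewrite /Qc H (bigD1_seq t (mem_ord6 t) uniq_ord6) /= /single mem6_mk eqxx mul1r.
rewrite big1_seq ?addr0 // => i /andP[it _]; by rewrite mem6_mk (negbTE it) mul0r.
Qed.

Lemma exit_one x t : tgt g p q P x = single t -> g t != x ->
  \sum_(y | y != x) Qc R g p q P x y = 1.
Proof.
move=> H tx; rewrite (eq_bigr (fun y => (g t == y)%:R - (x == y)%:R)); last first.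
  by move=> y _; rewrite (Q_single H).
by rewrite sumrB !sum_neq eqxx tx subr0.
Qed.

Lemma allowed (Q : T -> T -> R) (f : T -> T) x t :
  (forall y, Q x y = (t == y)%:R - (x == y)%:R) ->
  (forall x y, x != y -> Q x y = 0 -> f x != y) -> f x = x \/ f x = t.
Proof.
move=> Hx Hz; case: (eqVneq (f x) x) => [->|fx]; [by left | right].
apply/eqP; apply: contraT => ft.
have xf : x != f x by rewrite eq_sym.
have := Hz x (f x) xf; rewrite Hx eq_sym (negbTE ft) eq_sym (negbTE fx) subrr.
by move=> /(_ erefl); rewrite eqxx.
Qed.

Lemma mono_of (f : {ffun T -> T}) : monotone_map f -> forall x y, (x <= y)%O -> (f x <= f y)%O.
Proof. by move=> /forallP H x y; move: (H x) => /forallP/(_ y)/implyP. Qed.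


End Gen2.


Section I7.
Variables (R : realFieldType) (d : Order.disp_t) (T : finPOrderType d).
Variables (g : 'I_6 -> T).
Hypothesis ginj : injective g.
Hypothesis emb : forall i j, rel_of S7_strict i j = (g i <= g j)%O.
Let P7 := [:: true; false; true; false; false; true].
Let Q := Qc R g o1 o5 P7.

Let t0 : tgt g o1 o5 P7 (g o0) = single o1. Proof. by rewrite (tgt_img _ _ _ emb); vm_compute. Qed.
Let t1 : tgt g o1 o5 P7 (g o1) = single o5. Proof. by rewrite (tgt_img _ _ _ emb); vm_compute. Qed.
Let t2 : tgt g o1 o5 P7 (g o2) = single o1. Proof. by rewrite (tgt_img _ _ _ emb); vm_compute. Qed.
Let t3 : tgt g o1 o5 P7 (g o3) = single o5. Proof. by rewrite (tgt_img _ _ _ emb); vm_compute. Qed.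
Let t4 : tgt g o1 o5 P7 (g o4) = single o5. Proof. by rewrite (tgt_img _ _ _ emb); vm_compute. Qed.
Let t5 : tgt g o1 o5 P7 (g o5) = single o1. Proof. by rewrite (tgt_img _ _ _ emb); vm_compute. Qed.

Let le (i j : 'I_6) : (g i <= g j)%O = rel_of S7_strict i j. Proof. by rewrite emb. Qed.
Let neq (i j : 'I_6) : (g i == g j) = (i == j). Proof. exact: inj_eq. Qed.

Lemma nonreal7 : ~ realizably_monotone Q.
Proof.
move=> HR.
set E := [:: (g o1, g o5); (g o5, g o1)].
have HE : forall e, e \in E -> e.1 != e.2.
  move=> e; rewrite !inE => /orP[/eqP->|/eqP->]; by rewrite /= neq.
have Hpt : forall f : {ffun T -> T}, monotone_map f ->
     (forall x y, x != y -> Q x y = 0 -> f x != y) ->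
     \sum_(e <- E) ((f e.1 == e.2)%:R : R) <= \sum_(c <- [:: g o2]) (f c != c)%:R.
  move=> f mf Hz.
  have mono := mono_of mf.
  have al0 := allowed (Q_single R t0) Hz.
  have al1 := allowed (Q_single R t1) Hz.
  have al3 := allowed (Q_single R t3) Hz.
  have al4 := allowed (Q_single R t4) Hz.
  have al5 := allowed (Q_single R t5) Hz.
  have key1 : f (g o1) = g o5 -> f (g o2) != g o2.
    move=> h1.
    have he : f (g o4) = g o5.
      have := mono (g o1) (g o4); rewrite le h1 => /(_ isT).
      by case: al4 => -> //; rewrite le.
    apply/eqP => hc; have := mono (g o2) (g o4); rewrite le hc he le => /(_ isT).
    by [].
  have key2 : f (g o5) = g o1 -> f (g o2) != g o2.
    move=> h2.
    have ha : f (g o0) = g o1.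
      have := mono (g o0) (g o5); rewrite le h2 => /(_ isT).
      by case: al0 => -> //; rewrite le.
    have hd : f (g o3) = g o5.
      have := mono (g o0) (g o3); rewrite le ha => /(_ isT).
      by case: al3 => -> //; rewrite le.
    apply/eqP => hc; have := mono (g o2) (g o3); rewrite le hc hd le => /(_ isT).
    by [].
  have notboth : f (g o1) = g o5 -> f (g o5) = g o1 -> False.
    move=> h1 h2; have := mono (g o1) (g o5); rewrite le h1 h2 le => /(_ isT).
    by [].
  rewrite !big_cons !big_nil /=.
  case: (eqVneq (f (g o1)) (g o5)) => [h1|h1]; case: (eqVneq (f (g o5)) (g o1)) => [h2|h2].
  + by case: (notboth h1 h2).
  + by rewrite (key1 h1) /=; lra.
  + by rewrite (key2 h2) /=; lra.
  + by case: (f (g o2) != g o2) => /=; lra.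
have := no_real HE Hpt HR.
rewrite /Q !big_cons !big_nil /=.
  rewrite !(Q_single R t1) !(Q_single R t5) eqxx !neq /=.
  rewrite (eq_bigr (fun y => (g o1 == y)%:R - (g o2 == y)%:R)); last first.
    by move=> y _; rewrite (Q_single R t2).
  rewrite sumrB !sum_neq eqxx neq /=.
  lra.
Qed.
End I7.


Section I6.
Variables (R : realFieldType) (d : Order.disp_t) (T : finPOrderType d).
Variables (g : 'I_6 -> T).
Hypothesis ginj : injective g.
Hypothesis emb : forall i j, rel_of S6_strict i j = (g i <= g j)%O.
Let P6 := [:: true; true; false; true; false; true].
Let Q := Qc R g o2 o5 P6.

Let t0 : tgt g o2 o5 P6 (g o0) = single o2. Proof. by rewrite (tgt_img _ _ _ emb); vm_compute. Qed.
Let t1 : tgt g o2 o5 P6 (g o1) = single o2. Proof. by rewrite (tgt_img _ _ _ emb); vm_compute. Qed.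
Let t2 : tgt g o2 o5 P6 (g o2) = single o5. Proof. by rewrite (tgt_img _ _ _ emb); vm_compute. Qed.
Let t3 : tgt g o2 o5 P6 (g o3) = single o2. Proof. by rewrite (tgt_img _ _ _ emb); vm_compute. Qed.
Let t4 : tgt g o2 o5 P6 (g o4) = single o5. Proof. by rewrite (tgt_img _ _ _ emb); vm_compute. Qed.
Let t5 : tgt g o2 o5 P6 (g o5) = single o2. Proof. by rewrite (tgt_img _ _ _ emb); vm_compute. Qed.

Let le (i j : 'I_6) : (g i <= g j)%O = rel_of S6_strict i j. Proof. by rewrite emb. Qed.
Let neq (i j : 'I_6) : (g i == g j) = (i == j). Proof. exact: inj_eq. Qed.

Lemma nonreal6 : ~ realizably_monotone Q.
Proof.
move=> HR.
set E := [:: (g o0, g o2); (g o2, g o5); (g o5, g o2)].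
have HE : forall e, e \in E -> e.1 != e.2.
  move=> e; rewrite !inE => /orP[/eqP->|/orP[/eqP->|/eqP->]]; by rewrite /= neq.
have Hpt : forall f : {ffun T -> T}, monotone_map f ->
     (forall x y, x != y -> Q x y = 0 -> f x != y) ->
     \sum_(e <- E) ((f e.1 == e.2)%:R : R) <= \sum_(c <- [:: g o1; g o3]) (f c != c)%:R.
  move=> f mf Hz.
  have mono := mono_of mf.
  have al4 := allowed (Q_single R t4) Hz.
  have kA : f (g o0) = g o2 -> (f (g o1) != g o1) && (f (g o3) != g o3).
    move=> h; apply/andP; split; apply/eqP => hc.
    + by have := mono (g o0) (g o1); rewrite le h hc le => /(_ isT).
    + by have := mono (g o0) (g o3); rewrite le h hc le => /(_ isT).
  have kC : f (g o2) = g o5 -> f (g o1) != g o1.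
    move=> h1.
    have he : f (g o4) = g o5.
      have := mono (g o2) (g o4); rewrite le h1 => /(_ isT).
      by case: al4 => -> //; rewrite le.
    apply/eqP => hc; have := mono (g o1) (g o4); rewrite le hc he le => /(_ isT).
    by [].
  have kF : f (g o5) = g o2 -> f (g o3) != g o3.
    move=> h; apply/eqP => hc.
    by have := mono (g o3) (g o5); rewrite le h hc le => /(_ isT).
  have notboth : f (g o2) = g o5 -> f (g o5) = g o2 -> False.
    move=> h1 h2; have := mono (g o2) (g o5); rewrite le h1 h2 le => /(_ isT).
    by [].
  rewrite !big_cons !big_nil /=.
  case: (eqVneq (f (g o0)) (g o2)) => [hA|hA].
    move/andP: (kA hA) => [-> ->] /=.
    case: (eqVneq (f (g o2)) (g o5)) => [h1|h1]; case: (eqVneq (f (g o5)) (g o2)) => [h2|h2].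
    + by case: (notboth h1 h2).
    + by rewrite /=; lra.
    + by rewrite /=; lra.
    + by rewrite /=; lra.
  case: (eqVneq (f (g o2)) (g o5)) => [h1|h1]; case: (eqVneq (f (g o5)) (g o2)) => [h2|h2].
  + by case: (notboth h1 h2).
  + by rewrite (kC h1) /=; case: (f (g o3) != g o3) => /=; lra.
  + by rewrite (kF h2) /=; case: (f (g o1) != g o1) => /=; lra.
  + by case: (f (g o1) != g o1); case: (f (g o3) != g o3) => /=; lra.
have := no_real HE Hpt HR.
rewrite /Q !big_cons !big_nil /=.
  rewrite !(Q_single R t0) !(Q_single R t2) !(Q_single R t5) eqxx !neq /=.
  rewrite (exit_one R t1) ?neq // (exit_one R t3) ?neq //.
  lra.
Qed.
End I6.


Section I8.
Variables (R : realFieldType) (d : Order.disp_t) (T : finPOrderType d).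
Variables (g : 'I_6 -> T).
Hypothesis ginj : injective g.
Hypothesis emb : forall i j, rel_of S8_strict i j = (g i <= g j)%O.
Let P8 := [:: false; true; true; false; false; true].
Let Q := Qc R g o0 o5 P8.

Let t0 : tgt g o0 o5 P8 (g o0) = single o5. Proof. by rewrite (tgt_img _ _ _ emb); vm_compute. Qed.
Let t1 : tgt g o0 o5 P8 (g o1) = single o0. Proof. by rewrite (tgt_img _ _ _ emb); vm_compute. Qed.
Let t2 : tgt g o0 o5 P8 (g o2) = single o0. Proof. by rewrite (tgt_img _ _ _ emb); vm_compute. Qed.
Let t3 : tgt g o0 o5 P8 (g o3) = single o5. Proof. by rewrite (tgt_img _ _ _ emb); vm_compute. Qed.
Let t4 : tgt g o0 o5 P8 (g o4) = single o5. Proof. by rewrite (tgt_img _ _ _ emb); vm_compute. Qed.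
Let t5 : tgt g o0 o5 P8 (g o5) = single o0. Proof. by rewrite (tgt_img _ _ _ emb); vm_compute. Qed.

Let le (i j : 'I_6) : (g i <= g j)%O = rel_of S8_strict i j. Proof. by rewrite emb. Qed.
Let neq (i j : 'I_6) : (g i == g j) = (i == j). Proof. exact: inj_eq. Qed.

Lemma nonreal8 : ~ realizably_monotone Q.
Proof.
move=> HR.
set E := [:: (g o0, g o5); (g o5, g o0)].
have HE : forall e, e \in E -> e.1 != e.2.
  move=> e; rewrite !inE => /orP[/eqP->|/eqP->]; by rewrite /= neq.
have Hpt : forall f : {ffun T -> T}, monotone_map f ->
     (forall x y, x != y -> Q x y = 0 -> f x != y) ->
     \sum_(e <- E) ((f e.1 == e.2)%:R : R) <= \sum_(c <- [:: g o2]) (f c != c)%:R.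
  move=> f mf Hz.
  have mono := mono_of mf.
  have al1 := allowed (Q_single R t1) Hz.
  have al3 := allowed (Q_single R t3) Hz.
  have al4 := allowed (Q_single R t4) Hz.
  have key1 : f (g o0) = g o5 -> f (g o2) != g o2.
    move=> h1.
    have he : f (g o4) = g o5.
      have := mono (g o0) (g o4); rewrite le h1 => /(_ isT).
      by case: al4 => -> //; rewrite le.
    apply/eqP => hc; have := mono (g o2) (g o4); rewrite le hc he le => /(_ isT).
    by [].
  have key2 : f (g o5) = g o0 -> f (g o2) != g o2.
    move=> h2.
    have hb : f (g o1) = g o0.
      have := mono (g o1) (g o5); rewrite le h2 => /(_ isT).
      by case: al1 => -> //; rewrite le.
    have hd : f (g o3) = g o5.
      have := mono (g o1) (g o3); rewrite le hb => /(_ isT).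
      by case: al3 => -> //; rewrite le.
    apply/eqP => hc; have := mono (g o2) (g o3); rewrite le hc hd le => /(_ isT).
    by [].
  have notboth : f (g o0) = g o5 -> f (g o5) = g o0 -> False.
    move=> h1 h2; have := mono (g o0) (g o5); rewrite le h1 h2 le => /(_ isT).
    by [].
  rewrite !big_cons !big_nil /=.
  case: (eqVneq (f (g o0)) (g o5)) => [h1|h1]; case: (eqVneq (f (g o5)) (g o0)) => [h2|h2].
  + by case: (notboth h1 h2).
  + by rewrite (key1 h1) /=; lra.
  + by rewrite (key2 h2) /=; lra.
  + by case: (f (g o2) != g o2) => /=; lra.
have := no_real HE Hpt HR.
rewrite /Q !big_cons !big_nil /=.
  rewrite !(Q_single R t0) !(Q_single R t5) eqxx !neq /=.
  rewrite (eq_bigr (fun y => (g o0 == y)%:R - (g o2 == y)%:R)); last first.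
    by move=> y _; rewrite (Q_single R t2).
  rewrite sumrB !sum_neq eqxx neq /=.
  lra.
Qed.
End I8.


Local Close Scope ring_scope.
Unset Implicit Arguments. Set Strict Implicit.

Theorem proposition4p3 (R : realFieldType) (d : Order.disp_t) (T : finPOrderType d) :
  ((exists g : 'I_6 -> T, induced_embedding (rel_of S6_strict) g) \/
   (exists g : 'I_6 -> T, induced_embedding (rel_of S7_strict) g) \/
   (exists g : 'I_6 -> T, induced_embedding (rel_of S8_strict) g)) ->
  exists Q : T -> T -> R,
    generator Q /\ stoch_monotone Q /\ ~ realizably_monotone Q.
Proof.
move=> [[g [ginj emb]]|[[g [ginj emb]]|[g [ginj emb]]]].
- exists (Qc R g o2 o5 [:: true; true; false; true; false; true]).
  split; first exact: Qc_gen.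
  split; first exact: (Qc_mono _ emb chk6).
  exact: (nonreal6 ginj emb).
- exists (Qc R g o1 o5 [:: true; false; true; false; false; true]).
  split; first exact: Qc_gen.
  split; first exact: (Qc_mono _ emb chk7).
  exact: (nonreal7 ginj emb).
- exists (Qc R g o0 o5 [:: false; true; true; false; false; true]).
  split; first exact: Qc_gen.
  split; first exact: (Qc_mono _ emb chk8).
  exact: (nonreal8 ginj emb).
Qed.
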